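(* Let $B_1,B_2$ be two commuting nilpotent operators on a finite-dimensional complex vector space $V$. Then there exist a nilpotent operator $B_2'$ on $V$ and a vector $w\in V$ such that (i) $B_2'$ commutes with $B_1$; (ii) every linear combination $\alpha B_2+\beta B_2'$ ($\alpha,\beta\in\mathbb{C}$) is nilpotent; (iii) $w$ is a cyclic vector for the pair $(B_1,B_2')$, i.e. there is no proper subspace of $V$ invariant under $B_1$ and $B_2'$ and containing $w$. *)

(* Defs.v *)
From HB Require Import structures.
From mathcomp Require Import all_boot all_order all_algebra.
From mathcomp Require Import reals complex.
Set Implicit Arguments. Unset Strict Implicit. Unset Printing Implicit Defensive.
Import GRing.Theory Num.Theory.
Local Open Scope ring_scope.

(* Conventions: V = C^n realised as row vectors 'rV_n; an operator on V is a
   square matrix A acting by v |-> v *m A.  A subspace of V is represented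
   by (the row space of) a matrix, as in mxalgebra. *)

Definition nilpotent_mx (F : pzRingType) (n : nat) (A : 'M[F]_n) : Prop :=
  exists k : nat, A ^+ k = 0.

Definition cyclic_pair (F : fieldType) (n : nat) (A B : 'M[F]_n) (w : 'rV[F]_n) : Prop :=
  forall (W : 'M[F]_n),
    stablemx W A -> stablemx W B -> (w <= W)%MS -> (1%:M <= W)%MS.

(* Main.v *)
Require Import Defs.
From HB Require Import structures.
From mathcomp Require Import all_boot all_order all_algebra.
From mathcomp Require Import reals complex.
From mathcomp Require Import zify.
Import GRing.Theory Num.Theory.
Local Open Scope ring_scope.


Definition jkey (n la a i : nat) : nat := ((i + n - la) * n.+1 * n.+1 + la * n.+1 + a)%N.

Lemma keyA n la lb a b i j : (i + n - la < j + n - lb)%N -> (la <= n)%N -> (a <= n)%N ->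
  (jkey n la a i < jkey n lb b j)%N.
Proof.
rewrite /jkey => h1 h2 h3.
set H1 := (i + n - la)%N in h1 *; set H2 := (j + n - lb)%N in h1 *.
nia.
Qed.

Lemma keyB n la lb a b i j : (i + n - la = j + n - lb)%N -> (la < lb)%N -> (a <= n)%N ->
  (jkey n la a i < jkey n lb b j)%N.
Proof.
rewrite /jkey => h1 h2 h3.
rewrite h1. nia.
Qed.

Lemma keyC n l a b i j : (i + n - l = j + n - l)%N -> (a < b)%N -> 
  (jkey n l a i < jkey n l b j)%N.
Proof. rewrite /jkey => h1 h2; rewrite h1; lia. Qed.

Lemma key_shift n la a i j : (la <= n)%N -> jkey n la a (i + j) = (jkey n la a i + j * n.+1 * n.+1)%N.
Proof.
rewrite /jkey => h.
have -> : (i + j + n - la = (i + n - la) + j)%N by lia.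
nia.
Qed.

Lemma key_lift n la lb a b j : (la < n)%N -> (lb < n)%N ->
  (jkey n la a 0 < jkey n lb b j)%N -> (jkey n la.+1 a 0 < jkey n lb.+1 b j)%N.
Proof.
rewrite /jkey => h1 h2.
have -> : (0 + n - la = (0 + n - la.+1).+1)%N by lia.
have -> : (j + n - lb = (j + n - lb.+1).+1)%N by lia.
nia.
Qed.

Lemma ar1 n la lb : (0 < la)%N -> (la < n)%N -> (0 < lb)%N ->
  (0 + n - la.+1 < lb.-1 + n - lb)%N.
Proof. lia. Qed.

Lemma ar2 a k r : (a < k + r)%N -> (k <= a)%N -> (a - k < r)%N.
Proof. lia. Qed.

Lemma ar3 n lb : (0 < lb)%N -> (0 + n - 1 = lb.+1.-1 + n - lb.+1)%N.
Proof. lia. Qed.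

Lemma size_ps k (l : nat -> nat) :
  size (flatten [seq [seq (a, i) | i <- iota 0 (l a)] | a <- iota 0 k]) = (\sum_(a < k) l a)%N.
Proof.
elim: k => [|k IH]; first by rewrite big_ord0.
rewrite (_ : iota 0 k.+1 = iota 0 k ++ [:: k]); last by rewrite -addn1 iotaD.
by rewrite map_cat flatten_cat size_cat IH big_ord_recr /= cats0 size_map size_iota.
Qed.

Lemma mem_ps k (l : nat -> nat) a i :
  ((a, i) \in flatten [seq [seq (a, i) | i <- iota 0 (l a)] | a <- iota 0 k]) =
  (a < k)%N && (i < l a)%N.
Proof.
apply/flatten_mapP/andP.
  by case=> b; rewrite mem_iota /= => hb /mapP [j]; rewrite mem_iota => hj [-> ->].
case=> ha hi; exists a; first by rewrite mem_iota.
by apply/mapP; exists i; rewrite ?mem_iota.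
Qed.


Lemma ar4 n j lb1 lb : (lb1 < lb)%N -> (lb <= n)%N -> (j + n - lb < j + n - lb1)%N.
Proof. lia. Qed.


Section Gen.
Context {F : fieldType}.
Context {n : nat}.
Implicit Types (M x z : 'M[F]_n).

Definition NSpan k (l : nat -> nat) (e : nat -> nat -> 'rV[F]_n) (P : nat -> nat -> bool) :=
  (\sum_(b < k) \sum_(j < l b | P b j) <<e b j>>)%MS.

Lemma NSpan_sup k l e (P : nat -> nat -> bool) b j : (b < k)%N -> (j < l b)%N -> P b j ->
  (e b j <= NSpan k l e P)%MS.
Proof.
move=> hb hj hP; rewrite /NSpan.
apply: (sumsmx_sup (Ordinal hb)) => //.
by apply: (sumsmx_sup (Ordinal hj)) => //; rewrite genmxE.
Qed.

Lemma NSpan_subP k l e (P : nat -> nat -> bool) m (B : 'M_(m, n)) :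
  (forall b j, (b < k)%N -> (j < l b)%N -> P b j -> (e b j <= B)%MS) ->
  (NSpan k l e P <= B)%MS.
Proof.
move=> H; apply/sumsmx_subP => b _; apply/sumsmx_subP => j hP.
by rewrite genmxE; apply: H.
Qed.

Lemma NSpan_mono k l e (P Q : nat -> nat -> bool) :
  (forall b j, (b < k)%N -> (j < l b)%N -> P b j -> Q b j) ->
  (NSpan k l e P <= NSpan k l e Q)%MS.
Proof. by move=> H; apply: NSpan_subP => b j hb hj hP; apply: NSpan_sup => //; apply: H. Qed.

Lemma lower_nil k l e (jkey : nat -> nat -> nat) M :
  (1%:M <= NSpan k l e (fun _ _ => true))%MS ->
  (forall b j, (b < k)%N -> (j < l b)%N ->
     (e b j *m M <= NSpan k l e (fun b' j' => (jkey b j < jkey b' j')%N))%MS) ->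
  exists K, M ^+ K = 0.
Proof.
move=> hsp hlow.
pose Fm m := NSpan k l e (fun b j => m <= jkey b j)%N.
have step m : (1%:M *m M ^+ m <= Fm m)%MS.
  elim: m => [|m IH].
    by rewrite expr0 mulmx1; apply: (submx_trans hsp); apply: NSpan_mono.
  rewrite exprSr -mulmxE mulmxA.
  apply: (submx_trans (submxMr M IH)).
  rewrite {1}/Fm /NSpan sumsmxMr.
  apply/sumsmx_subP => b _.
  rewrite sumsmxMr.
  apply/sumsmx_subP => j hj.
  rewrite (eqmxMr _ (genmxE _)).
  apply: (submx_trans (hlow b j (ltn_ord b) (ltn_ord j))).
  by apply: NSpan_mono => b' j' _ _ h; apply: leq_trans h.
pose K := (\sum_(b < k) \sum_(j < l b) jkey b j).+1.
exists K.
have := step K; rewrite mul1mx => h.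
apply/eqP; rewrite -submx0; apply: (submx_trans h).
apply: NSpan_subP => b j hb hj hle; exfalso.
have: (jkey b j < K)%N; last by rewrite ltnNge hle.
rewrite /K ltnS (bigD1 (Ordinal hb)) //= (bigD1 (Ordinal hj)) //=.
by rewrite -addnA leq_addr.
Qed.

End Gen.


Section Greedy.
Context {F : fieldType}.
Context {n : nat}.

Lemma mxpowSr (v : 'rV[F]_n) (x : 'M_n) i : v *m x ^+ i.+1 = v *m x ^+ i *m x.
Proof. by rewrite exprSr -mulmxE mulmxA. Qed.

Lemma stable_pow m (A : 'M[F]_(m, n)) (T : 'M_n) (x : 'M_n) i :
  stablemx T x -> (A <= T)%MS -> (A *m x ^+ i <= T)%MS.
Proof.
move=> hs hA; elim: i => [|i IH]; first by rewrite expr0 mulmx1.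
by rewrite exprSr -mulmxE mulmxA; apply: submx_trans hs; apply: submxMr.
Qed.

Lemma sum_sup_nat r (P : pred nat) (f : nat -> 'rV[F]_n) m (v : 'M_(m, n)) i :
  (i < r)%N -> P i -> (v <= f i)%MS -> (v <= \sum_(b < r | P b) <<f b>>)%MS.
Proof.
by move=> hi hP hv; apply: (sumsmx_sup (Ordinal hi)) => //; rewrite genmxE.
Qed.

Lemma sum_subP_nat r (P : pred nat) (f : nat -> 'rV[F]_n) m (B : 'M_(m, n)) :
  (forall i, (i < r)%N -> P i -> (f i <= B)%MS) -> (\sum_(b < r | P b) <<f b>> <= B)%MS.
Proof. by move=> H; apply/sumsmx_subP => b hb; rewrite genmxE; apply: H. Qed.

Variable z : 'M[F]_n.
Hypothesis nz : exists N, z ^+ N = 0.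

Lemma find_kernel {T W : 'M[F]_n} : stablemx T z -> ~~ (T <= W)%MS ->
  exists k : 'rV_n, [/\ (k <= T)%MS, ~~ (k <= W)%MS & (k *m z <= W)%MS].
Proof.
move=> sT /row_subPn [i hi].
set v := row i T.
have vT : (v <= T)%MS by apply: row_sub.
case: nz => N hN.
have exP : exists j, (v *m z ^+ j.+1 <= W)%MS.
  by exists N; rewrite exprSr hN mul0r mulmx0 sub0mx.
case: (ex_minnP exP) => j0 hj0 hmin.
exists (v *m z ^+ j0); split.
- exact: stable_pow.
- case: j0 hj0 hmin => [|j] hj0 hmin; first by rewrite expr0 mulmx1.
  apply/negP => hj; have := hmin j hj; by rewrite ltnn.
- by rewrite -mxpowSr.
Qed.

Lemma greedy (T W : 'M[F]_n) : (W <= T)%MS -> stablemx T z -> stablemx W z ->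
  exists r (ks : nat -> 'rV[F]_n),
   [/\ forall a, (a < r)%N -> (ks a <= T)%MS,
       forall a, (a < r)%N -> (ks a *m z <= W + \sum_(b < r | (a < b)%N) <<ks b>>)%MS,
       (T <= W + \sum_(b < r) <<ks b>>)%MS &
       \rank T = (\rank W + r)%N].
Proof.
move=> WT sT.
move: {2}(\rank T - \rank W)%N (erefl (\rank T - \rank W)%N) => d.
elim: d W WT => [|d IH] W WT hd sW.
  have TW : (T <= W)%MS.
    by rewrite -(geq_leqif (mxrank_leqif_sup WT)) -subn_eq0 hd.
  exists 0%N, (fun _ => 0); split => //.
  - by apply: (submx_trans TW); apply: addsmxSl.
  - by rewrite addn0; apply/eqP; rewrite eqn_leq !mxrankS.
case TW: (T <= W)%MS.
  have: \rank T = \rank W by apply/eqP; rewrite eqn_leq !mxrankS.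
  by move=> e; move: hd; rewrite e subnn.
case: (find_kernel sT (negbT TW) : exists k, _) => k [kT kW kz].
set W1 := (W + k)%MS.
have W1T : (W1 <= T)%MS by rewrite addsmx_sub WT.
have rW1 : \rank W1 = (\rank W).+1.
  apply/eqP; rewrite eqn_leq; apply/andP; split.
    apply: leq_trans (mxrank_adds_leqif W k).1 _.
    by rewrite -[X in (_ <= X)%N]addn1 leq_add2l rank_leq_row.
  have := mxrank_leqif_sup (addsmxSl W k) => /leqifP.
  by case: ifP => // h _; move: kW; rewrite (submx_trans (addsmxSr W k) h).
have sW1 : stablemx W1 z.
  rewrite /W1 addsmxMr addsmx_sub; apply/andP; split.
    by apply: (submx_trans sW); apply: addsmxSl.
  by apply: (submx_trans kz); apply: addsmxSl.
have hd1 : (\rank T - \rank W1)%N = d by rewrite rW1 subnS hd.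
case: (IH W1 W1T hd1 sW1) => r [ks [h1 h2 h3 h4]].
exists r.+1, (fun a => if (a < r)%N then ks a else k); split.
- by move=> a _; case: ifP => // ha; apply: h1.
- move=> a; rewrite ltnS leq_eqVlt => /orP [/eqP ->|ha].
    rewrite ltnn; apply: (submx_trans kz); apply: addsmxSl.
  rewrite ha; apply: (submx_trans (h2 a ha)).
  rewrite addsmx_sub; apply/andP; split.
    rewrite addsmx_sub; apply/andP; split; first exact: addsmxSl.
    apply: submx_trans (addsmxSr _ _).
    by apply: (sumsmx_sup (Ordinal (ltnSn r))) => //=; rewrite ltnn genmxE.
  apply/sumsmx_subP => -[i hi] hai /=; rewrite genmxE; apply: submx_trans (addsmxSr _ _).
  by apply: (sumsmx_sup (Ordinal (ltnW hi : (i < r.+1)%N))) => //=; rewrite hi genmxE.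
- apply: (submx_trans h3).
  rewrite addsmx_sub; apply/andP; split.
    rewrite addsmx_sub; apply/andP; split; first exact: addsmxSl.
    apply: submx_trans (addsmxSr _ _).
    by apply: (sumsmx_sup (Ordinal (ltnSn r))) => //=; rewrite ltnn genmxE.
  apply/sumsmx_subP => -[i hi] _ /=; rewrite genmxE; apply: submx_trans (addsmxSr _ _).
  by apply: (sumsmx_sup (Ordinal (ltnW hi : (i < r.+1)%N))) => //=; rewrite hi genmxE.
- by rewrite h4 rW1 addSnnS.
Qed.

End Greedy.


Section Main.
Variable F : fieldType.
Variable n : nat.
Variables x z : 'M[F]_n.
Hypothesis xz : x *m z = z *m x.
Hypothesis nx : exists N, x ^+ N = 0.
Hypothesis nz : exists N, z ^+ N = 0.

Definition Sp k (g : nat -> 'rV[F]_n) (l : nat -> nat) (P : nat -> nat -> bool) := NSpan k l (fun b j => g b *m x ^+ j) P.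
Definition kk la a i := jkey n la a i.

Record JD (U : 'M[F]_n) k (g : nat -> 'rV[F]_n) (l : nat -> nat) : Prop := {
 jd_in : forall a, (a < k)%N -> (g a <= U)%MS;
 jd_pow : forall a, (a < k)%N -> g a *m x ^+ l a = 0;
 jd_pos : forall a, (a < k)%N -> (0 < l a)%N;
 jd_dec : forall a, (a.+1 < k)%N -> (l a.+1 <= l a)%N;
 jd_span : (U <= Sp k g l (fun _ _ => true))%MS;
 jd_rank : \rank U = (\sum_(a<k) l a)%N;
 jd_ker : (U :&: kermx x <= \sum_(a<k) <<g a *m x ^+ (l a).-1>>)%MS;
 jd_krank : \rank (U :&: kermx x) = k;
 jd_adapt : forall a, (a < k)%N ->
    (g a *m z <= Sp k g l (fun b j => (kk (l a) a 0 < kk (l b) b j)%N))%MS }.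

Arguments jd_in {U k g l}. Arguments jd_pow {U k g l}. Arguments jd_pos {U k g l}.
Arguments jd_dec {U k g l}. Arguments jd_span {U k g l}. Arguments jd_rank {U k g l}.
Arguments jd_ker {U k g l}. Arguments jd_krank {U k g l}. Arguments jd_adapt {U k g l}.

Lemma jd_l_le U k g l : JD U k g l -> forall a, (a < k)%N -> (l a <= \rank U)%N.
Proof.
move=> J a ha; rewrite (jd_rank J) (bigD1 (Ordinal ha)) //=; exact: leq_addr.
Qed.

Lemma jd_k_le U k g l : JD U k g l -> (k <= \rank U)%N.
Proof. by move=> J; rewrite -(jd_krank J); apply: mxrankS; apply: capmxSl. Qed.

Arguments jd_l_le {U k g l}. Arguments jd_k_le {U k g l}.

Lemma xpow_comm i : x ^+ i *m z = z *m x ^+ i.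
Proof.
elim: i => [|i IH]; first by rewrite expr0 mul1mx mulmx1.
by rewrite exprS -mulmxE -mulmxA IH !mulmxA xz.
Qed.

Lemma xpow_comm' i : x ^+ i *m x = x *m x ^+ i.
Proof. by rewrite !mulmxE -exprSr exprS. Qed.

Lemma mxpowS (v : 'rV[F]_n) i : v *m x ^+ i.+1 = v *m x *m x ^+ i.
Proof. by rewrite exprS -mulmxE mulmxA. Qed.

Lemma mxpowD (v : 'rV[F]_n) i j : v *m x ^+ (i + j) = v *m x ^+ i *m x ^+ j.
Proof. by rewrite exprD -mulmxE mulmxA. Qed.

Lemma pullback m (v : 'M[F]_(m, n)) (A : 'M_n) :
  (v *m x <= A *m x)%MS -> (v <= A + kermx x)%MS.
Proof.
case/submxP => D hD.
have -> : v = D *m A + (v - D *m A) by rewrite addrC subrK.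
apply: addmx_sub_adds; first exact: submxMl.
by apply/sub_kermxP; rewrite mulmxBl hD mulmxA subrr.
Qed.

Lemma NSpan_mulr k l e (P : nat -> nat -> bool) (M : 'M[F]_n) m (B : 'M_(m, n)) :
  (forall b j, (b < k)%N -> (j < l b)%N -> P b j -> (e b j *m M <= B)%MS) ->
  (NSpan k l e P *m M <= B)%MS.
Proof.
move=> H; rewrite /NSpan sumsmxMr; apply/sumsmx_subP => b _.
rewrite sumsmxMr; apply/sumsmx_subP => j hj.
by rewrite (eqmxMr _ (genmxE _)); apply: H.
Qed.

Lemma Sp_sup k (g : nat -> 'rV[F]_n) l (P : nat -> nat -> bool) b j :
  (b < k)%N -> (j < l b)%N -> P b j -> (g b *m x ^+ j <= Sp k g l P)%MS.
Proof. exact: (@NSpan_sup _ _ k l (fun b j => g b *m x ^+ j) P b j). Qed.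

Lemma Sp_in (U : 'M[F]_n) k g l P : stablemx U x -> (forall a, (a < k)%N -> (g a <= U)%MS) ->
  (Sp k g l P <= U)%MS.
Proof.
by move=> sU H; apply: NSpan_subP => b j hb _ _; apply: stable_pow => //; apply: H.
Qed.


Lemma sumS m (f : nat -> nat) : (\sum_(i < m) (f i).+1 = \sum_(i < m) f i + m)%N.
Proof. elim: m => [|m IH]; first by rewrite !big_ord0. rewrite !big_ord_recr /= IH. set s := (\sum_(i < m) f i)%N. lia. Qed.

Lemma sum1 m : (\sum_(i < m) 1 = m)%N.
Proof. elim: m => [|m IH]; first by rewrite big_ord0. by rewrite big_ord_recr /= IH addn1. Qed.

Lemma kerz : (kermx x *m z <= kermx x)%MS.
Proof. by apply/sub_kermxP; rewrite -mulmxA -xz mulmxA mulmx_ker mul0mx. Qed.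

Lemma capst (A B : 'M[F]_n) : stablemx A z -> stablemx B z -> stablemx (A :&: B)%MS z.
Proof.
move=> hA hB; rewrite sub_capmx; apply/andP; split.
  by apply: submx_trans hA; apply: submxMr; apply: capmxSl.
by apply: submx_trans hB; apply: submxMr; apply: capmxSr.
Qed.

Lemma jd_step (U : 'M[F]_n) k' g' l' : stablemx U x -> stablemx U z ->
  (\rank (U *m x) < \rank U)%N -> JD (U *m x) k' g' l' -> exists k g l, JD U k g l.
Proof.
move=> sUx sUz hr J'.
set U' := U *m x.
have U'U : (U' <= U)%MS := sUx.
have rUn : (\rank U <= n)%N := rank_leq_col U.
have l'n : forall b, (b < k')%N -> (l' b < n)%N.
  by move=> b hb; have := jd_l_le J' b hb; lia.
have k'n : (k' < n)%N by have := jd_k_le J'; lia.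
have l'pos := jd_pos J'.
pose lift (v : 'rV[F]_n) := v *m pinvmx U' *m U.
have liftx v : (v <= U')%MS -> lift v *m x = v.
  by move=> hv; rewrite /lift -mulmxA mulmxKpV.
have liftU v : (lift v <= U)%MS by apply: submxMl.
set K0 := (U' :&: kermx x)%MS.
set T := (U :&: kermx x)%MS.
have K0T : (K0 <= T)%MS by apply: capmxS.
have sU'z : stablemx U' z by rewrite /U' -mulmxA xz mulmxA; apply: submxMr.
have sTz : stablemx T z by apply: capst => //; apply: kerz.
have sK0z : stablemx K0 z by apply: capst => //; apply: kerz.
case: (@greedy _ _ z nz T K0 K0T sTz sK0z) => r [ks [k1 k2 k3 k4]].
have ksx c : (c < r)%N -> ks c *m x = 0.
  move=> hc; apply/sub_kermxP; apply: submx_trans (k1 c hc) _; exact: capmxSr.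
have ksU c : (c < r)%N -> (ks c <= U)%MS.
  move=> hc; apply: submx_trans (k1 c hc) _; exact: capmxSl.
pose k := (k' + r)%N.
pose g a := if (a < k')%N then lift (g' a) else ks (a - k')%N.
pose l a := if (a < k')%N then (l' a).+1 else 1%N.
have rT : \rank T = k by rewrite k4 (jd_krank J').
have kn : (k <= \rank U)%N by rewrite -rT; apply: mxrankS; apply: capmxSl.
have g_lift b : (b < k')%N -> g b *m x = g' b.
  by move=> hb; rewrite /g hb liftx //; apply: (jd_in J').
have g_powS b j : (b < k')%N -> g b *m x ^+ j.+1 = g' b *m x ^+ j.
  by move=> hb; rewrite mxpowS g_lift.
have g_new c : g (k' + c)%N = ks c.
  by rewrite /g ltnNge leq_addr /= addKn.
have l_new c : l (k' + c)%N = 1%N.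
  by rewrite /l ltnNge leq_addr.
have l_old b : (b < k')%N -> l b = (l' b).+1 by move=> hb; rewrite /l hb.
have bot b : (b < k')%N -> g' b *m x ^+ (l' b).-1 = g b *m x ^+ (l b).-1.
  move=> hb; rewrite l_old //= -g_powS // prednK //; exact: l'pos.
have g_in : forall a, (a < k)%N -> (g a <= U)%MS.
  move=> a ha; rewrite /g; case: ifP => h; first exact: liftU.
  apply: ksU; rewrite /k in ha; lia.
have SpU'U (P' P : nat -> nat -> bool) :
   (forall b j, (b < k')%N -> (j < l' b)%N -> P' b j -> P b j) ->
   (Sp k' g' l' P' <= Sp k g l P *m x)%MS.
  move=> HP; apply: NSpan_subP => b j hb hj hP.
  rewrite -g_powS // mxpowSr; apply: submxMr.
  apply: (@Sp_sup _ _ _ _ b j).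
  - by rewrite /k ltn_addr.
  - by rewrite l_old // ltnS ltnW.
  - exact: HP.
have bots_in (P : nat -> nat -> bool) :
   (forall b, (b < k)%N -> P b (l b).-1) ->
   (\sum_(a < k) <<g a *m x ^+ (l a).-1>> <= Sp k g l P)%MS.
  move=> HP; apply/sumsmx_subP => a _; rewrite genmxE.
  apply: (@Sp_sup _ _ _ _ a (l a).-1); [by [] | | by apply: HP].
  have: (0 < l a)%N by rewrite /l; case: ifP.
  by move=> h; rewrite prednK.
have Jker : (T <= \sum_(a < k) <<g a *m x ^+ (l a).-1>>)%MS.
  apply: (submx_trans k3); rewrite addsmx_sub; apply/andP; split.
    apply: (submx_trans (jd_ker J')); apply/sumsmx_subP => b _; rewrite genmxE.
    have hb : (b < k)%N by rewrite /k ltn_addr.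
    by apply: (sumsmx_sup (Ordinal hb)) => //=; rewrite genmxE bot.
  apply/sumsmx_subP => c _; rewrite genmxE.
  have hc : (k' + c < k)%N by rewrite /k ltn_add2l.
  by apply: (sumsmx_sup (Ordinal hc)) => //=; rewrite genmxE l_new g_new expr0 mulmx1.
exists k; exists g; exists l; constructor.
- exact: g_in.
- move=> a ha; rewrite /g /l; case: ifP => h.
    by rewrite mxpowS liftx ?(jd_pow J') //; apply: (jd_in J').
  by rewrite expr1 ksx //; rewrite /k in ha; lia.
- by move=> a _; rewrite /l; case: ifP.
- move=> a ha; rewrite /l; case: ifP => h1; case: ifP => h2 //.
  + by rewrite ltnS; apply: (jd_dec J').
  + by lia.
- have SpU : (Sp k g l (fun _ _ => true) <= U)%MS by apply: Sp_in.
  have hUx : (U *m x <= Sp k g l (fun _ _ => true) *m x)%MS.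
    by apply: (submx_trans (jd_span J')); apply: SpU'U.
  have hU := @pullback _ _ _ hUx.
  have : (U <= (Sp k g l (fun _ _ => true) + kermx x) :&: U)%MS.
    by rewrite sub_capmx hU submx_refl.
  rewrite -(matrix_modl _ SpU) => h; apply: (submx_trans h).
  rewrite addsmx_sub submx_refl /= capmxC.
  by apply: (submx_trans Jker); apply: bots_in.
- rewrite -(mxrank_mul_ker U x) (jd_rank J') -/T rT /k big_split_ord /=.
  have e1 : (\sum_(i < k') l i = \sum_(i < k') (l' i).+1)%N.
    by apply: eq_bigr => i _; rewrite /l (ltn_ord i).
  have e2 : (\sum_(i < r) l (k' + i) = \sum_(i < r) 1)%N.
    by apply: eq_bigr => i _; rewrite l_new.
  by rewrite e1 e2 sumS sum1 addnA.
- exact: Jker.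
- exact: rT.
- move=> a ha; have [hlt|hge] := ltnP a k'.
  + set P := (fun b j => (kk (l a) a 0 < kk (l b) b j)%N).
    have la : l a = (l' a).+1 := l_old a hlt.
    have hx : (g a *m z *m x <= Sp k g l P *m x)%MS.
      rewrite -mulmxA -xz mulmxA g_lift //.
      apply: (submx_trans (jd_adapt J' a hlt)); apply: SpU'U => b j hb hj hP.
      rewrite /P la l_old //; rewrite /kk in hP *; apply: key_lift => //; exact: l'n.
    have hU := @pullback _ _ _ hx.
    have SpU : (Sp k g l P <= U)%MS by apply: Sp_in.
    have gzU : (g a *m z <= U)%MS := submx_trans (submxMr z (g_in a ha)) sUz.
    have : (g a *m z <= (Sp k g l P + kermx x) :&: U)%MS by rewrite sub_capmx hU gzU.
    rewrite -(matrix_modl _ SpU) => h; apply: (submx_trans h).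
    rewrite addsmx_sub submx_refl /= capmxC.
    apply: (submx_trans Jker); apply: bots_in => b hb.
    have lbpos : (0 < l b)%N by rewrite /l; case: ifP.
    have l'a := l'pos a hlt; have l'an := l'n a hlt.
    rewrite /P /kk la; apply: keyA.
    * exact: ar1.
    * exact: l'an.
    * by apply: ltnW; apply: leq_trans ha (leq_trans kn rUn).
  + have ea : a = (k' + (a - k'))%N by rewrite subnKC.
    have hc : (a - k' < r)%N by apply: ar2.
    move: (a - k')%N ea hc => c -> hc.
    rewrite g_new l_new.
    apply: (submx_trans (k2 c hc)); rewrite addsmx_sub; apply/andP; split.
    * apply: (submx_trans (jd_ker J')); apply/sumsmx_subP => b _; rewrite genmxE bot //.
      have hb : (b < k)%N by rewrite /k ltn_addr.
      have lb := l_old b (ltn_ord b); have l'b := l'pos b (ltn_ord b).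
      apply: (@Sp_sup _ _ _ _ b (l b).-1) => //; first by rewrite lb.
      rewrite /kk lb; apply: keyB; [exact: ar3 | by rewrite ltnS |].
      by apply: leq_trans (leq_trans kn rUn); rewrite /k ltnW // ltn_add2l.
    * apply/sumsmx_subP => c' hcc'; rewrite genmxE.
      have -> : ks c' = g (k' + c')%N *m x ^+ 0 by rewrite expr0 mulmx1 g_new.
      apply: (@Sp_sup _ _ _ _ (k' + c')%N 0) => //.
      - by rewrite /k ltn_add2l.
      - by rewrite l_new.
      - rewrite l_new /kk; apply: keyC => //; by rewrite ltn_add2l.
Qed.

Lemma jd_zero (U : 'M[F]_n) : U = 0 -> JD U 0 (fun _ => 0) (fun _ => 0%N).
Proof.
move=> ->; constructor => //.
- by rewrite sub0mx.
- by rewrite mxrank0 big_ord0.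
- by apply: submx_trans (capmxSl _ _) _; rewrite sub0mx.
- by apply/eqP; rewrite -leqn0 -(mxrank0 F n n); apply: mxrankS; apply: capmxSl.
Qed.

Lemma rank_dec (U : 'M[F]_n) : stablemx U x -> (0 < \rank U)%N -> (\rank (U *m x) < \rank U)%N.
Proof.
move=> sU hr; rewrite ltnNge; apply/negP => hle.
have UUx : (U <= U *m x)%MS by rewrite -(geq_leqif (mxrank_leqif_sup sU)).
have pw j : (U <= U *m x ^+ j)%MS.
  elim: j => [|j IH]; first by rewrite expr0 mulmx1.
  apply: (submx_trans UUx); rewrite exprSr -mulmxE mulmxA.
  by apply: submxMr; exact: IH.
case: nx => N hN; have := pw N; rewrite hN mulmx0 submx0 => /eqP U0.
by move: hr; rewrite U0 mxrank0.
Qed.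

Lemma jd_exists m : forall U : 'M[F]_n, (\rank U <= m)%N -> stablemx U x -> stablemx U z ->
  exists k g l, JD U k g l.
Proof.
elim: m => [|m IH] U hr sUx sUz.
  exists 0%N; exists (fun _ => 0); exists (fun _ => 0%N); apply: jd_zero.
  by apply/eqP; rewrite -mxrank_eq0 -leqn0.
case: (posnP (\rank U)) => h0.
  exists 0%N; exists (fun _ => 0); exists (fun _ => 0%N); apply: jd_zero.
  by apply/eqP; rewrite -mxrank_eq0 h0.
have hd := @rank_dec U sUx h0.
have sU'x : stablemx (U *m x) x by apply: submxMr.
have sU'z : stablemx (U *m x) z by rewrite -mulmxA xz mulmxA; apply: submxMr.
have hr' : (\rank (U *m x) <= m)%N by rewrite -ltnS; apply: leq_trans hd hr.
case: (IH _ hr' sU'x sU'z) => k' [g' [l' J']].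
exact: (@jd_step U k' g' l' sUx sUz hd J').
Qed.

Lemma final : exists (y : 'M[F]_n) (w : 'rV[F]_n),
  [/\ x *m y = y *m x,
      forall a b : F, exists K, (a *: z + b *: y) ^+ K = 0 &
      forall W : 'M[F]_n, stablemx W x -> stablemx W y -> (w <= W)%MS -> (1%:M <= W)%MS].
Proof.
have [k [g [l J]]] := @jd_exists n 1%:M (rank_leq_col (1%:M : 'M[F]_n)) (submx1 _) (submx1 _).
have rn : (\sum_(a < k) l a)%N = n by rewrite -(jd_rank J) mxrank1.
have ln a : (a < k)%N -> (l a <= n)%N.
  by move=> ha; have := jd_l_le J a ha; rewrite mxrank1.
have kn : (k <= n)%N by have := jd_k_le J; rewrite mxrank1.
pose gy a := if (a.+1 < k)%N then g a.+1 else 0.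
pose ps := flatten [seq [seq (a, i) | i <- iota 0 (l a)] | a <- iota 0 k].
have sps : size ps = n by rewrite size_ps rn.
pose S := \matrix_(p < n) (g (nth (0, 0) ps p).1 *m x ^+ (nth (0, 0) ps p).2)%N.
pose T := \matrix_(p < n) (gy (nth (0, 0) ps p).1 *m x ^+ (nth (0, 0) ps p).2)%N.
have idx a i : (a < k)%N -> (i < l a)%N ->
    exists p : 'I_n, nth (0, 0)%N ps p = (a, i).
  move=> ha hi; have hm : ((a, i) \in ps) by rewrite mem_ps ha hi.
  have hp : (index (a, i) ps < n)%N by rewrite -sps index_mem.
  by exists (Ordinal hp); rewrite /= nth_index.
have Sfull : (1%:M <= S)%MS.
  apply: (submx_trans (jd_span J)); apply: NSpan_subP => a i ha hi _.
  have [p hp] := idx a i ha hi.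
  by have := row_sub p S; rewrite rowK hp.
have Sunit : S \in unitmx.
  rewrite -row_free_unit /row_free eqn_leq rank_leq_row /=.
  by have := mxrankS Sfull; rewrite mxrank1.
pose y := invmx S *m T.
have ydef a i : (a < k)%N -> (i < l a)%N -> g a *m x ^+ i *m y = gy a *m x ^+ i.
  move=> ha hi; have [p hp] := idx a i ha hi.
  have h := row_mul p S y; rewrite /y mulKVmx // !rowK hp /= in h.
  by rewrite /y -h.
have ext (A B : 'M[F]_n) : (forall a i, (a < k)%N -> (i < l a)%N ->
    g a *m x ^+ i *m A = g a *m x ^+ i *m B) -> A = B.
  move=> H; rewrite -(mulKmx Sunit A) -(mulKmx Sunit B); congr (_ *m _).
  apply/row_matrixP => p; rewrite !row_mul rowK.
  have : (nth (0, 0)%N ps p \in ps) by rewrite mem_nth // sps.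
  case: (nth (0, 0)%N ps p) => a i; rewrite mem_ps => /andP [ha hi].
  exact: H.
clearbody y.
have gx_zero b j : (b < k)%N -> (l b <= j)%N -> g b *m x ^+ j = 0.
  move=> hb hj; rewrite -(subnKC hj) mxpowD (jd_pow J b hb); exact: mul0mx.
have gy_pow a i : (a < k)%N -> (l a <= i)%N -> gy a *m x ^+ i = 0.
  move=> ha hi; rewrite /gy; case: ifP => h; last exact: mul0mx.
  by apply: gx_zero => //; apply: leq_trans (jd_dec J a h) hi.
exists y, (g 0%N); split.
- apply: ext => a i ha hi.
  rewrite !mulmxA ydef // -!mxpowSr.
  case: (ltnP i.+1 (l a)) => h; first by rewrite ydef.
  by rewrite gx_zero // gy_pow // mul0mx.
- move=> al be.
  apply: (@lower_nil _ _ k l (fun b j => g b *m x ^+ j) (fun b j => kk (l b) b j)) => [|b j hb hj].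
    exact: (jd_span J).
  rewrite mulmxDr -!scalemxAr; apply: addmx_sub; apply: scalemx_sub.
  + rewrite -mulmxA xpow_comm mulmxA.
    apply: submx_trans (submxMr _ (jd_adapt J b hb)) _.
    apply: NSpan_mulr => b' j' hb' hj' hP.
    rewrite -mxpowD.
    case: (ltnP (j' + j) (l b')) => hjj; last by rewrite gx_zero // sub0mx.
    apply: (@NSpan_sup _ _ k l (fun b j => g b *m x ^+ j) _ b' (j' + j)) => //.
    have e1 : kk (l b) b j = (kk (l b) b 0 + j * n.+1 * n.+1)%N.
      by rewrite /kk -key_shift ?add0n //; apply: ln.
    have e2 : kk (l b') b' (j' + j) = (kk (l b') b' j' + j * n.+1 * n.+1)%N.
      by rewrite /kk key_shift //; apply: ln.
    by rewrite e1 e2 ltn_add2r.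
  + rewrite ydef // /gy.
    case: ifP => hb1; last by rewrite mul0mx sub0mx.
    case: (ltnP j (l b.+1)) => hj1; last by rewrite gx_zero // sub0mx.
    apply: (@NSpan_sup _ _ k l (fun b j => g b *m x ^+ j) _ b.+1 j) => //.
    have dec := jd_dec J b hb1.
    case: (ltnP (l b.+1) (l b)) => hlt.
      rewrite /kk; apply: keyA; first by apply: ar4 => //; apply: ln.
        by apply: ln.
      by apply: ltnW; apply: leq_trans hb kn.
    have e : l b.+1 = l b by apply/eqP; rewrite eqn_leq dec hlt.
    by rewrite e /kk; apply: keyC.
- move=> W sWx sWy hw.
  have gW a : (a < k)%N -> (g a <= W)%MS.
    elim: a => [_|a IH ha]; first exact: hw.
    have ha' : (a < k)%N := ltnW ha.
    have := ydef a 0%N ha' (jd_pos J a ha'); rewrite expr0 !mulmx1 /gy ha => <-.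
    exact: submx_trans (submxMr y (IH ha')) sWy.
  apply: (submx_trans (jd_span J)); apply: NSpan_subP => b j hb _ _.
  by apply: stable_pow => //; apply: gW.
Qed.

End Main.


Theorem lemma2p3 (R : realType) (n : nat) (B1 B2 : 'M[R[i]]_n) :
  nilpotent_mx B1 -> nilpotent_mx B2 -> B1 *m B2 = B2 *m B1 ->
  exists (B2' : 'M[R[i]]_n) (w : 'rV[R[i]]_n),
    [/\ nilpotent_mx B2',
        B1 *m B2' = B2' *m B1,
        (forall a b : R[i], nilpotent_mx (a *: B2 + b *: B2')) &
        cyclic_pair B1 B2' w].
Proof.
move=> n1 n2 c.
have [y [w [h1 h2 h3]]] := @final (R[i]) n B1 B2 c n1 n2.
exists y, w; split.
- have [K hK] := h2 0 1; exists K.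
  by rewrite scale0r add0r scale1r in hK.
- exact: h1.
- by move=> a b; apply: h2.
- by move=> W; apply: h3.
Qed.
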